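(* Let $\mathrm{S}$ be a semicopula such that for each $a\in(0,1)$ the interval $[0,1]$ is the union of countably many closed intervals on each of which the function $x\mapsto\mathrm{S}(a,x)$ is either constant or strictly increasing. Then the following are equivalent: (i) for every measurable space $(X,\mathcal{A})$, every capacity $\mu$ on $\mathcal{A}$, every $\mathcal{A}$-measurable $f\colon X\to[0,1]$ and every $a\in[0,1]$, $$\mathbf{I}_{\mathrm{S}}\big(\mu,\mathrm{S}(a,f)\big)=\mathrm{S}\big(a,\mathbf{I}_{\mathrm{S}}(\mu,f)\big),$$ where $\mathrm{S}(a,f)$ denotes the function $x\mapsto\mathrm{S}(a,f(x))$; (ii) $\mathrm{S}$ is associative (i.e. $\mathrm{S}(\mathrm{S}(x,y),z)=\mathrm{S}(x,\mathrm{S}(y,z))$ for all $x,y,z\in[0,1]$) and for each $a\in(0,1)$ the function $[0,1]\ni x\mapsto\mathrm{S}(a,x)$ is continuous.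
   Context: A semicopula is a function $\mathrm{S}\colon[0,1]^2\to[0,1]$ that is non-decreasing in each coordinate and has neutral element $1$, i.e. $\mathrm{S}(x,1)=\mathrm{S}(1,x)=x$ for all $x\in[0,1]$. For a measurable space $(X,\mathcal{A})$ (with $X$ nonempty and $\mathcal{A}$ a $\sigma$-algebra), a capacity on $\mathcal{A}$ is a non-decreasing set function $\mu\colon\mathcal{A}\to[0,1]$ with $\mu(\emptyset)=0$ and $\mu(X)=1$. For a capacity $\mu$ and an $\mathcal{A}$-measurable $f\colon X\to[0,1]$, the generalized Sugeno integral is $$\mathbf{I}_{\mathrm{S}}(\mu,f)=\sup_{t\in[0,1]}\mathrm{S}\big(t,\mu(\{x\in X: f(x)\ge t\})\big).$$ *)

(* Defs.v *)
From Stdlib Require Import Reals ClassicalEpsilon.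
Open Scope R_scope.

Definition in01 (x : R) : Prop := 0 <= x <= 1.

(* Semicopula on [0,1] (values outside [0,1] are irrelevant). *)
Definition semicopula (S : R -> R -> R) : Prop :=
  (forall x y, in01 x -> in01 y -> in01 (S x y)) /\
  (forall x1 x2 y, in01 x1 -> in01 x2 -> in01 y -> x1 <= x2 -> S x1 y <= S x2 y) /\
  (forall x y1 y2, in01 x -> in01 y1 -> in01 y2 -> y1 <= y2 -> S x y1 <= S x y2) /\
  (forall x, in01 x -> S x 1 = x /\ S 1 x = x).

Definition sigma_algebra {X : Type} (A : (X -> Prop) -> Prop) : Prop :=
  A (fun _ => False) /\
  (forall E, A E -> A (fun x => ~ E x)) /\
  (forall F : nat -> X -> Prop, (forall n, A (F n)) -> A (fun x => exists n, F n x)).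

Definition borel (B : R -> Prop) : Prop :=
  forall Sg : (R -> Prop) -> Prop, sigma_algebra Sg ->
    (forall a b, Sg (fun x => a < x < b)) -> Sg B.

Definition measurable {X : Type} (A : (X -> Prop) -> Prop) (f : X -> R) : Prop :=
  forall B, borel B -> A (fun x => B (f x)).

Definition capacity {X : Type} (A : (X -> Prop) -> Prop) (mu : (X -> Prop) -> R) : Prop :=
  (forall E, A E -> in01 (mu E)) /\
  (forall E F, A E -> A F -> (forall x, E x -> F x) -> mu E <= mu F) /\
  mu (fun _ => False) = 0 /\ mu (fun _ => True) = 1.

Definition Rsup (E : R -> Prop) : R := epsilon (inhabits 0) (fun m => is_lub E m).

Definition sugeno {X : Type} (S : R -> R -> R) (mu : (X -> Prop) -> R) (f : X -> R) : R :=
  Rsup (fun y => exists t, in01 t /\ y = S t (mu (fun x => t <= f x))).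

Definition piecewise_cst_or_strict (g : R -> R) : Prop :=
  exists l u : nat -> R,
    (forall n, 0 <= l n <= u n /\ u n <= 1) /\
    (forall x, in01 x -> exists n, l n <= x <= u n) /\
    (forall n, (forall x y, l n <= x <= u n -> l n <= y <= u n -> g x = g y) \/
               (forall x y, l n <= x <= u n -> l n <= y <= u n -> x < y -> g x < g y)).

Definition continuous01 (g : R -> R) : Prop :=
  forall x, in01 x -> forall eps, 0 < eps -> exists delta, 0 < delta /\
    forall y, in01 y -> Rabs (y - x) < delta -> Rabs (g y - g x) < eps.

(* Main.v *)
Require Import Defs.
From Stdlib Require Import Reals.
From Stdlib Require Import Lra ClassicalEpsilon Classical FunctionalExtensionality PropExtensionality.
Open Scope R_scope.

Lemma Rsup_eq E m : is_lub E m -> Rsup E = m.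
Proof.
  intro H. unfold Rsup.
  assert (H2 : is_lub E (epsilon (inhabits 0) (fun m => is_lub E m))).
  { apply epsilon_spec. exists m; exact H. }
  destruct H as [Hu Hl]; destruct H2 as [Hu2 Hl2].
  apply Rle_antisym; [apply Hl2; exact Hu | apply Hl; exact Hu2].
Qed.

Lemma Rsup_spec E : (exists y, E y) -> (forall y, E y -> y <= 1) -> is_lub E (Rsup E).
Proof.
  intros Hne Hb.
  destruct (completeness E) as [m Hm].
  - exists 1. intros y Hy. apply Hb, Hy.
  - exact Hne.
  - rewrite (Rsup_eq E m Hm). exact Hm.
Qed.

Lemma arch d : 0 < d -> exists n, / (INR n + 1) < d.
Proof.
  intro Hd. destruct (archimed_cor1 d Hd) as [N [H1 H2]].
  exists (pred N). rewrite <- S_INR. rewrite Nat.succ_pred_pos; auto.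
Qed.

Section SC.
Variable S : R -> R -> R.
Hypothesis HS : semicopula S.

Lemma sc_rng x y : in01 x -> in01 y -> in01 (S x y).
Proof. destruct HS as [H _]; auto. Qed.
Lemma sc_m1 x1 x2 y : in01 x1 -> in01 x2 -> in01 y -> x1 <= x2 -> S x1 y <= S x2 y.
Proof. destruct HS as [_ [H _]]; auto. Qed.
Lemma sc_m2 x y1 y2 : in01 x -> in01 y1 -> in01 y2 -> y1 <= y2 -> S x y1 <= S x y2.
Proof. destruct HS as [_ [_ [H _]]]; auto. Qed.
Lemma sc_x1 x : in01 x -> S x 1 = x.
Proof. destruct HS as [_ [_ [_ H]]]; intro; apply H; auto. Qed.
Lemma sc_1x x : in01 x -> S 1 x = x.
Proof. destruct HS as [_ [_ [_ H]]]; intro; apply H; auto. Qed.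
Lemma i01_0 : in01 0. Proof. unfold in01; lra. Qed.
Lemma i01_1 : in01 1. Proof. unfold in01; lra. Qed.
Hint Resolve i01_0 i01_1 : core.
Lemma sc_x0 x : in01 x -> S x 0 = 0.
Proof.
  intro Hx. apply Rle_antisym.
  - rewrite <- (sc_1x 0) at 2; auto. apply sc_m1; auto. destruct Hx; lra.
  - apply sc_rng; auto.
Qed.
Lemma sc_0x x : in01 x -> S 0 x = 0.
Proof.
  intro Hx. apply Rle_antisym.
  - rewrite <- (sc_x1 0) at 2; auto. apply sc_m2; auto. destruct Hx; lra.
  - apply sc_rng; auto.
Qed.

Definition sugset {X : Type} (mu : (X -> Prop) -> R) (h : X -> R) :=
  fun y => exists t, in01 t /\ y = S t (mu (fun x => t <= h x)).

Lemma sug_lub {X : Type} (mu : (X -> Prop) -> R) (h : X -> R) :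
  (forall t, in01 t -> in01 (mu (fun x => t <= h x))) ->
  is_lub (sugset mu h) (sugeno S mu h) /\ in01 (sugeno S mu h).
Proof.
  intro Hm.
  assert (Hl : is_lub (sugset mu h) (sugeno S mu h)).
  { apply Rsup_spec.
    - exists (S 0 (mu (fun x => 0 <= h x))). exists 0. split; auto.
    - intros y [t [Ht ->]]. apply sc_rng; auto. }
  split; auto. destruct Hl as [Hu Hl]. split.
  - apply Hu. exists 0. split; auto. rewrite sc_0x; auto.
  - apply Hl. intros y [t [Ht ->]]. apply sc_rng; auto.
Qed.

Definition mu_b (y : R) (E : bool -> Prop) : R :=
  if excluded_middle_informative (E false) then 1
  else if excluded_middle_informative (E true) then y else 0.

Lemma mu_b_cap y : in01 y -> capacity (fun _ => True) (mu_b y).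
Proof.
  intro Hy. unfold mu_b. split; [|split; [|split]].
  - intros E _. destruct (excluded_middle_informative _); auto.
    destruct (excluded_middle_informative _); auto.
  - intros E F _ _ HEF.
    destruct (excluded_middle_informative (E false)) as [H1|H1];
    destruct (excluded_middle_informative (F false)) as [H2|H2]; try lra.
    + exfalso; auto.
    + destruct (excluded_middle_informative (E true)); destruct Hy; lra.
    + destruct (excluded_middle_informative (E true)) as [H3|H3];
      destruct (excluded_middle_informative (F true)) as [H4|H4]; try lra.
      * exfalso; auto.
      * destruct Hy; lra.
  - destruct (excluded_middle_informative False) as [H|H]; [contradiction|].
    destruct (excluded_middle_informative False) as [H'|H']; [contradiction|]. reflexivity.
  - destruct (excluded_middle_informative True) as [H|H]; [reflexivity|exfalso; auto].
Qed.

Lemma sug_bool y x h : in01 y -> in01 x -> h true = x -> h false = 0 ->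
  sugeno S (mu_b y) h = S x y.
Proof.
  intros Hy Hx Ht Hf. apply Rsup_eq. split.
  - intros v [t [Ht0 ->]]. unfold mu_b.
    destruct (excluded_middle_informative _) as [H1|H1].
    + rewrite Hf in H1. assert (t = 0) by (destruct Ht0; lra). subst t.
      rewrite sc_0x; auto. apply sc_rng; auto.
    + destruct (excluded_middle_informative _) as [H2|H2].
      * rewrite Ht in H2. apply sc_m1; auto.
      * rewrite sc_x0; auto. apply sc_rng; auto.
  - intros b Hb. apply Hb. exists x. split; auto. unfold mu_b.
    destruct (excluded_middle_informative _) as [H1|H1].
    + rewrite Hf in H1. assert (x = 0) by (destruct Hx; lra). subst x.
      rewrite H, !sc_0x; auto.
    + destruct (excluded_middle_informative _) as [H2|H2]; auto.
      exfalso. apply H2. rewrite Ht. lra.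
Qed.

Definition mu_all (E : nat -> Prop) : R :=
  if excluded_middle_informative (forall n, E n) then 1 else 0.
Definition mu_ex (E : nat -> Prop) : R :=
  if excluded_middle_informative (exists n, E n) then 1 else 0.

Lemma mu_all_cap : capacity (fun _ => True) mu_all.
Proof.
  unfold mu_all. split; [|split; [|split]].
  - intros E _. destruct (excluded_middle_informative _); auto.
  - intros E F _ _ HEF.
    destruct (excluded_middle_informative (forall n, E n)) as [H1|H1];
    destruct (excluded_middle_informative (forall n, F n)) as [H2|H2]; try lra.
    exfalso; auto.
  - destruct (excluded_middle_informative _) as [H|H]; auto. exfalso; exact (H 0%nat).
  - destruct (excluded_middle_informative _) as [H|H]; auto. exfalso; auto.
Qed.

Lemma mu_ex_cap : capacity (fun _ => True) mu_ex.
Proof.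
  unfold mu_ex. split; [|split; [|split]].
  - intros E _. destruct (excluded_middle_informative _); auto.
  - intros E F _ _ HEF.
    destruct (excluded_middle_informative (exists n, E n)) as [H1|H1];
    destruct (excluded_middle_informative (exists n, F n)) as [H2|H2]; try lra.
    exfalso. destruct H1 as [n Hn]; eauto.
  - destruct (excluded_middle_informative _) as [H|H]; auto. destruct H as [n []].
  - destruct (excluded_middle_informative _) as [H|H]; auto. exfalso; apply H; exists 0%nat; auto.
Qed.

Lemma mu_all_01 E : in01 (mu_all E).
Proof. unfold mu_all; destruct (excluded_middle_informative _); auto. Qed.
Lemma mu_ex_01 E : in01 (mu_ex E).
Proof. unfold mu_ex; destruct (excluded_middle_informative _); auto. Qed.

Lemma borel_ge t : borel (fun r => t <= r).
Proof.
  intros Sg [H0 [HC HU]] Hint.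
  assert (E : (fun r => t <= r) = (fun r => ~ (exists n, t - INR n - 1 < r < t))).
  { apply functional_extensionality; intro r; apply propositional_extensionality; split.
    - intros H [n Hn]; lra.
    - intro H. apply Rnot_lt_le. intro Hr. apply H.
      destruct (INR_unbounded (t - r)) as [n Hn]. exists n. lra. }
  rewrite E. apply HC. apply HU. intro n. apply Hint.
Qed.

Lemma triv_sigma (X : Type) : sigma_algebra (fun _ : X -> Prop => True).
Proof. split; [|split]; auto. Qed.


Lemma level a s : in01 a -> continuous01 (fun x => S a x) -> in01 s ->
  (forall y, in01 y -> S a y < s) \/
  (exists t, in01 t /\ S a t = s /\ forall y, in01 y -> (s <= S a y <-> t <= y)).
Proof.
  intros Ha Hc Hs.
  destruct (Rlt_dec a s) as [Has|Has].
  { left. intros y Hy. apply Rle_lt_trans with (S a 1).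
    - apply sc_m2; auto. destruct Hy; lra.
    - rewrite sc_x1; auto. }
  right.
  destruct (Req_dec s 0) as [Hs0|Hs0].
  { exists 0. split; auto. split; [rewrite sc_x0; auto|]. intros y Hy. subst s.
    split; intro Hq; [destruct Hy; lra | apply sc_rng; auto]. }
  set (L := fun y => in01 y /\ S a y < s).
  assert (HL0 : L 0). { split; auto. rewrite sc_x0; auto. destruct Hs; lra. }
  destruct (completeness L) as [t [Hu Hl]].
  { exists 1. intros y [Hy _]. destruct Hy; lra. }
  { exists 0; auto. }
  assert (Ht : in01 t).
  { split. apply Hu; auto. apply Hl. intros y [Hy _]; destruct Hy; lra. }
  assert (Hlt : forall y, in01 y -> y < t -> S a y < s).
  { intros y Hy Hyt. destruct (classic (exists z, L z /\ y < z)) as [[z [[Hz Hz2] Hyz]]|Hn].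
    - apply Rle_lt_trans with (S a z); auto. apply sc_m2; auto; lra.
    - exfalso. assert (Hty : t <= y).
      { apply Hl. intros z Hz. apply Rnot_lt_le. intro Hq. apply Hn. eauto. }
      lra. }
  assert (Heq : S a t = s).
  { destruct (Rtotal_order (S a t) s) as [H|[H|H]]; auto; exfalso.
    - assert (He : 0 < s - S a t) by lra.
      destruct (Hc t Ht _ He) as [d [Hd Hd2]].
      destruct (Req_dec t 1) as [Ht1|Ht1].
      + rewrite Ht1, sc_x1 in H; auto; lra.
      + set (y := Rmin 1 (t + d/2)).
        assert (Hy : in01 y).
        { unfold y; split. apply Rmin_glb; destruct Ht; lra. apply Rmin_l. }
        assert (Hty : t < y).
        { unfold y. unfold Rmin; destruct Rle_dec; destruct Ht; lra. }
        assert (HLy : L y).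
        { split; auto.
          assert (Hyd : Rabs (y - t) < d).
          { rewrite Rabs_right; [|lra]. unfold y. pose proof (Rmin_r 1 (t + d/2)). lra. }
          specialize (Hd2 y Hy Hyd). apply Rabs_def2 in Hd2. lra. }
        pose proof (Hu y HLy). lra.
    - assert (He : 0 < S a t - s) by lra.
      destruct (Hc t Ht _ He) as [d [Hd Hd2]].
      assert (Htd : t <= t - d/2).
      { apply Hl. intros y [Hy Hys]. apply Rnot_lt_le. intro Hyt.
        assert (Hyt2 : y <= t) by (apply Hu; split; auto).
        assert (Hyd : Rabs (y - t) < d) by (rewrite Rabs_left1; lra).
        specialize (Hd2 y Hy Hyd). apply Rabs_def2 in Hd2. lra. }
      lra. }
  exists t. split; auto. split; auto. intros y Hy. split; intro Hq.
  - apply Rnot_lt_le. intro Hyt. specialize (Hlt y Hy Hyt). lra.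
  - rewrite <- Heq. apply sc_m2; auto.
Qed.

Lemma cont_all (Hc : forall a, 0 < a < 1 -> continuous01 (fun x => S a x)) a :
  in01 a -> continuous01 (fun x => S a x).
Proof.
  intro Ha. destruct (Req_dec a 0) as [H0|H0].
  { subst a. intros x Hx e He. exists 1. split; [lra|]. intros y Hy _.
    rewrite !sc_0x; auto. replace (0 - 0) with 0 by ring. rewrite Rabs_R0; lra. }
  destruct (Req_dec a 1) as [H1|H1].
  { subst a. intros x Hx e He. exists e. split; [lra|]. intros y Hy Hd.
    rewrite !sc_1x; auto. }
  apply Hc. destruct Ha; lra.
Qed.
End SC.

Theorem theorem2 (S : R -> R -> R) (HS : semicopula S)
  (Hpw : forall a, 0 < a < 1 -> piecewise_cst_or_strict (fun x => S a x)) :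
  (forall (X : Type) (A : (X -> Prop) -> Prop) (mu : (X -> Prop) -> R) (f : X -> R) (a : R),
      inhabited X -> sigma_algebra A -> capacity A mu ->
      (forall x, in01 (f x)) -> measurable A f -> in01 a ->
      sugeno S mu (fun x => S a (f x)) = S a (sugeno S mu f))
  <->
  ((forall x y z, in01 x -> in01 y -> in01 z -> S (S x y) z = S x (S y z)) /\
   (forall a, 0 < a < 1 -> continuous01 (fun x => S a x))).
Proof.
  split.
  - intros Hi. split.
    + intros x y z Hx Hy Hz.
      pose (f := fun b : bool => if b then y else 0).
      assert (Hf : forall b, in01 (f b)) by (intros []; simpl; auto using i01_0).
      pose proof (Hi bool (fun _ => True) (mu_b z) f x (inhabits true) (triv_sigma bool)
                    (mu_b_cap z Hz) Hf (fun _ _ => I) Hx) as E.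
      assert (E1 : sugeno S (mu_b z) (fun b => S x (f b)) = S (S x y) z).
      { apply sug_bool; auto. apply sc_rng; auto. simpl. apply sc_x0; auto. }
      assert (E2 : sugeno S (mu_b z) f = S y z) by (apply sug_bool; auto).
      rewrite E1, E2 in E. exact E.
    + intros a Ha x Hx e He.
      assert (Ha01 : in01 a) by (split; lra).
      pose (fr := fun n : nat => Rmin 1 (x + / (INR n + 1))).
      assert (Hfr : forall n, in01 (fr n)).
      { intro n. unfold fr. split; [apply Rmin_glb; [lra| pose proof (RinvN_pos n); destruct Hx; lra] | apply Rmin_l]. }
      pose proof (Hi nat (fun _ => True) mu_all fr a (inhabits 0%nat) (triv_sigma nat)
                    mu_all_cap Hfr (fun _ _ => I) Ha01) as Er.
      destruct (sug_lub S HS mu_all fr (fun t _ => mu_all_01 _)) as [[Hu1 Hl1] Hs1].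
      assert (Hsx : sugeno S mu_all fr <= x).
      { apply Hl1. intros v [t [Ht ->]]. unfold mu_all.
        destruct (excluded_middle_informative _) as [H|H].
        - rewrite sc_x1; auto. apply Rnot_lt_le; intro Hxt.
          destruct (arch (t - x)) as [n Hn]; [lra|]. specialize (H n). unfold fr in H.
          pose proof (Rmin_r 1 (x + /(INR n + 1))). lra.
        - rewrite sc_x0; auto. destruct Hx; lra. }
      assert (Hn1 : exists n, S a (fr n) < S a x + e).
      { destruct (classic (exists n, S a (fr n) < S a x + e)) as [H|H]; auto. exfalso.
        assert (Hall : forall n, S a x + e <= S a (fr n)).
        { intro n; apply Rnot_lt_le; intro; apply H; eauto. }
        destruct (Rle_dec (S a x + e) 1) as [Hle|Hgt].
        - destruct (sug_lub S HS mu_all (fun n => S a (fr n)) (fun t _ => mu_all_01 _)) as [[Hu2 _] _].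
          assert (Hq : S a x + e <= sugeno S mu_all (fun n => S a (fr n))).
          { apply Hu2. exists (S a x + e).
            assert (Hi01 : in01 (S a x + e)).
            { pose proof (sc_rng S HS a x Ha01 Hx) as [? ?]. split; lra. }
            split; auto. unfold mu_all. destruct (excluded_middle_informative _) as [Hq|Hq].
            - rewrite sc_x1; auto.
            - exfalso; apply Hq; exact Hall. }
          rewrite Er in Hq. pose proof (sc_m2 S HS a _ x Ha01 Hs1 Hx Hsx). lra.
        - specialize (Hall 0%nat). pose proof (sc_rng S HS a (fr 0%nat) Ha01 (Hfr 0%nat)) as [_ ?]. lra. }
      pose (fl := fun n : nat => Rmax 0 (x - / (INR n + 1))).
      assert (Hfl : forall n, in01 (fl n)).
      { intro n. unfold fl. split; [apply Rmax_l | apply Rmax_lub; [lra | pose proof (RinvN_pos n); destruct Hx; lra]]. }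
      pose proof (Hi nat (fun _ => True) mu_ex fl a (inhabits 0%nat) (triv_sigma nat)
                    mu_ex_cap Hfl (fun _ _ => I) Ha01) as El.
      destruct (sug_lub S HS mu_ex fl (fun t _ => mu_ex_01 _)) as [[Hu3 Hl3] Hs3].
      assert (Hxs : x <= sugeno S mu_ex fl).
      { apply Rnot_lt_le; intro Hlt.
        destruct (arch (x - sugeno S mu_ex fl)) as [n Hn]; [lra|].
        assert (Hq : fl n <= sugeno S mu_ex fl).
        { apply Hu3. exists (fl n). split; auto. unfold mu_ex.
          destruct (excluded_middle_informative _) as [H|H].
          - rewrite sc_x1; auto.
          - exfalso; apply H; exists n; apply Rle_refl. }
        assert (Hq2 : x - /(INR n + 1) <= fl n) by (unfold fl; apply Rmax_r). lra. }
      assert (Hn2 : exists n, S a x - e < S a (fl n)).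
      { destruct (classic (exists n, S a x - e < S a (fl n))) as [H|H]; auto. exfalso.
        assert (Hall : forall n, S a (fl n) <= S a x - e).
        { intro n; apply Rnot_lt_le; intro; apply H; eauto. }
        destruct (sug_lub S HS mu_ex (fun n => S a (fl n)) (fun t _ => mu_ex_01 _)) as [[_ Hl4] _].
        assert (Hq : sugeno S mu_ex (fun n => S a (fl n)) <= S a x - e).
        { apply Hl4. intros v [t [Ht ->]]. unfold mu_ex.
          destruct (excluded_middle_informative _) as [[m Hm]|Hm].
          - rewrite sc_x1; auto. specialize (Hall m). lra.
          - rewrite sc_x0; auto. specialize (Hall 0%nat).
            pose proof (sc_rng S HS a (fl 0%nat) Ha01 (Hfl 0%nat)) as [? _]. lra. }
        rewrite El in Hq. pose proof (sc_m2 S HS a x (sugeno S mu_ex fl) Ha01 Hx Hs3 Hxs). lra. }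
      destruct Hn1 as [n1 Hn1]; destruct Hn2 as [n2 Hn2].
      exists (Rmin (/(INR n1 + 1)) (/(INR n2 + 1))). split.
      { apply Rmin_pos; apply RinvN_pos. }
      intros y Hy Hd. cbv beta.
      pose proof (Rmin_l (/(INR n1 + 1)) (/(INR n2 + 1))).
      pose proof (Rmin_r (/(INR n1 + 1)) (/(INR n2 + 1))).
      apply Rabs_def2 in Hd. destruct Hd as [Hd1 Hd2].
      destruct (Rle_dec x y) as [Hxy|Hxy].
      * assert (Hyf : y <= fr n1) by (unfold fr; apply Rmin_glb; [destruct Hy|]; lra).
        pose proof (sc_m2 S HS a x y Ha01 Hx Hy Hxy).
        pose proof (sc_m2 S HS a y (fr n1) Ha01 Hy (Hfr n1) Hyf).
        apply Rabs_def1; lra.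
      * assert (Hyf : fl n2 <= y) by (unfold fl; apply Rmax_lub; [destruct Hy|]; lra).
        pose proof (sc_m2 S HS a y x Ha01 Hy Hx ltac:(lra)).
        pose proof (sc_m2 S HS a (fl n2) y Ha01 (Hfl n2) Hy Hyf).
        apply Rabs_def1; lra.
  - intros [Hassoc Hcont] X A mu f a _ HA Hcap Hf Hmeas Ha.
    pose proof (cont_all S HS Hcont a Ha) as Hc.
    destruct Hcap as [Hc01 [Hcmon [Hc0 Hc1]]].
    destruct HA as [HA0 _].
    assert (HAt : forall t, A (fun x => t <= f x)).
    { intro t. exact (Hmeas (fun r => t <= r) (borel_ge t)). }
    assert (Hm : forall t, in01 (mu (fun x => t <= f x))) by (intro; apply Hc01; auto).
    destruct (sug_lub S HS mu f (fun t _ => Hm t)) as [[Hu0 Hl0] HM].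
    set (M := sugeno S mu f) in *.
    assert (Hlev : forall s, in01 s ->
      (fun x => s <= S a (f x)) = (fun _ => False) \/
      exists t, in01 t /\ S a t = s /\ (fun x => s <= S a (f x)) = (fun x => t <= f x)).
    { intros s Hs. destruct (level S HS a s Ha Hc Hs) as [H|[t [Ht [Hts Hiff]]]].
      - left. apply functional_extensionality; intro x; apply propositional_extensionality.
        split; [|intros []]. intro H'. specialize (H (f x) (Hf x)). lra.
      - right. exists t. split; auto. split; auto.
        apply functional_extensionality; intro x; apply propositional_extensionality.
        apply Hiff, Hf. }
    assert (HB : forall s, in01 s -> A (fun x => s <= S a (f x))).
    { intros s Hs. destruct (Hlev s Hs) as [E|[t [_ [_ E]]]]; rewrite E; auto. }
    apply Rsup_eq. split.
    + intros v [s [Hs ->]]. cbv beta.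
      destruct (Hlev s Hs) as [E|[t [Ht [Hts E]]]]; rewrite E.
      * rewrite Hc0, sc_x0; auto. apply sc_rng; auto.
      * rewrite <- Hts, Hassoc; auto. apply sc_m2; auto. apply sc_rng; auto.
        apply Hu0. exists t; split; auto.
    + intros b Hb. apply Rnot_lt_le; intro Hlt.
      assert (He : 0 < S a M - b) by lra.
      destruct (Hc M HM _ He) as [d [Hd Hd2]].
      destruct (classic (exists e, sugset S mu f e /\ M - d < e)) as [[e [[t [Ht ->]] He2]]|Hn].
      * assert (Hele : S t (mu (fun x => t <= f x)) <= M) by (apply Hu0; exists t; split; auto).
        assert (He01 : in01 (S t (mu (fun x => t <= f x)))) by (apply sc_rng; auto).
        assert (Hd3 : Rabs (S t (mu (fun x => t <= f x)) - M) < d) by (rewrite Rabs_left1; lra).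
        specialize (Hd2 _ He01 Hd3). apply Rabs_def2 in Hd2. destruct Hd2 as [_ Hd2].
        assert (Hsb : S a (S t (mu (fun x => t <= f x))) <= b).
        { rewrite <- Hassoc; auto.
          assert (Hat : in01 (S a t)) by (apply sc_rng; auto).
          apply Rle_trans with (S (S a t) (mu (fun x => S a t <= S a (f x)))).
          - assert (Hq1 : in01 (mu (fun x => S a t <= S a (f x)))) by (apply Hc01, HB; auto).
            assert (Hq2 : mu (fun x => t <= f x) <= mu (fun x => S a t <= S a (f x))).
            { apply Hcmon; auto. intros x Hx. apply sc_m2; auto. }
            apply sc_m2; auto.
          - apply Hb. exists (S a t). split; auto. }
        lra.
      * assert (Hq : M <= M - d).
        { apply Hl0. intros e' He'. apply Rnot_lt_le. intro. apply Hn. eauto. }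
        lra.
Qed.
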